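(* In the labelled calculus $\mathbf{G3I}$, the rules $L\prec$: from $x\prec y,\Sigma;\underline{\Gamma},x:A,y:A\Rightarrow\underline{\Delta}$ infer $x\prec y,\Sigma;\underline{\Gamma},x:A\Rightarrow\underline{\Delta}$, and $R\prec$: from $x\prec y,\Sigma;\underline{\Gamma}\Rightarrow\underline{\Delta},x:A,y:A$ infer $x\prec y,\Sigma;\underline{\Gamma}\Rightarrow\underline{\Delta},y:A$ are admissible (whenever the premiss is derivable, so is the conclusion), for arbitrary formulae $A$.
   Context: Formulae are propositional formulae built from atoms, $\bot$, $\land$, $\lor$, $\supset$; labelled formulae are $x:A$ with $x$ a label. A labelled sequent is $\Sigma;\underline{\Gamma}\Rightarrow\underline{\Delta}$ with $\Sigma$ a finite multiset of relational formulae $x\prec y$ and $\underline{\Gamma},\underline{\Delta}$ finite multisets of labelled formulae; $S$ stands for $\underline{\Gamma}\Rightarrow\underline{\Delta}$. The rules of $\mathbf{G3I}$ ($P$ atomic): Ax: $x\prec y,\Sigma;x:P,\underline{\Gamma}\Rightarrow y:P,\underline{\Delta}$; L$\bot$: $\Sigma;x:\bot,\underline{\Gamma}\Rightarrow\underline{\Delta}$; L$\land$: from $\Sigma;\underline{\Gamma},x:A,x:B\Rightarrow\underline{\Delta}$ infer $\Sigma;\underline{\Gamma},x:(A\land B)\Rightarrow\underline{\Delta}$; R$\land$: from $\Sigma;\underline{\Gamma}\Rightarrow x:A,\underline{\Delta}$ and $\Sigma;\underline{\Gamma}\Rightarrow x:B,\underline{\Delta}$ infer $\Sigma;\underline{\Gamma}\Rightarrow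 x:(A\land B),\underline{\Delta}$; L$\lor$: from $\Sigma;\underline{\Gamma},x:A\Rightarrow\underline{\Delta}$ and $\Sigma;\underline{\Gamma},x:B\Rightarrow\underline{\Delta}$ infer $\Sigma;\underline{\Gamma},x:(A\lor B)\Rightarrow\underline{\Delta}$; R$\lor$: from $\Sigma;\underline{\Gamma}\Rightarrow x:A,x:B,\underline{\Delta}$ infer $\Sigma;\underline{\Gamma}\Rightarrow x:(A\lor B),\underline{\Delta}$; L$\supset$: from $x\prec y,\Sigma;x:(A\supset B),\underline{\Gamma}\Rightarrow\underline{\Delta},y:A$ and $x\prec y,\Sigma;x:(A\supset B),y:B,\underline{\Gamma}\Rightarrow\underline{\Delta}$ infer $x\prec y,\Sigma;x:(A\supset B),\underline{\Gamma}\Rightarrow\underline{\Delta}$; R$\supset$: from $x\prec y,\Sigma;y:A,\underline{\Gamma}\Rightarrow\underline{\Delta},y:B$ infer $\Sigma;\underline{\Gamma}\Rightarrow\underline{\Delta},x:(A\supset B)$, with $y$ fresh; refl: from $x\prec x,\Sigma;S$ infer $\Sigma;S$; trans: from $x\prec y,y\prec z,x\prec z,\Sigma;S$ infer $x\prec y,y\prec z,\Sigma;S$. *)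

(* Defs.v *)
From Stdlib Require Import List Permutation.
Import ListNotations.

Inductive form : Type :=
| Atom : nat -> form
| Bot : form
| And : form -> form -> form
| Or : form -> form -> form
| Imp : form -> form -> form.

Definition label := nat.
(* relational formula x ≺ y is the pair (x, y) *)
Definition relf := (label * label)%type.
Definition lform := (label * form)%type.

Definition rel_labels (S : list relf) : list label :=
  flat_map (fun p => [fst p; snd p]) S.
Definition lf_labels (G : list lform) : list label := map fst G.

(* Multisets are represented by lists; the rule [G3I_mset] identifies
   lists that are permutations of each other, so that derivability is a
   property of the underlying multisets. *)
Inductive G3I : list relf -> list lform -> list lform -> Prop :=
| G3I_mset S G D S' G' D' :
    G3I S G D -> Permutation S S' -> Permutation G G' -> Permutation D D' ->
    G3I S' G' D'
| G3I_Ax x y P S G D :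
    G3I ((x, y) :: S) ((x, Atom P) :: G) ((y, Atom P) :: D)
| G3I_Lbot x S G D :
    G3I S ((x, Bot) :: G) D
| G3I_Land x A B S G D :
    G3I S ((x, A) :: (x, B) :: G) D ->
    G3I S ((x, And A B) :: G) D
| G3I_Rand x A B S G D :
    G3I S G ((x, A) :: D) ->
    G3I S G ((x, B) :: D) ->
    G3I S G ((x, And A B) :: D)
| G3I_Lor x A B S G D :
    G3I S ((x, A) :: G) D ->
    G3I S ((x, B) :: G) D ->
    G3I S ((x, Or A B) :: G) D
| G3I_Ror x A B S G D :
    G3I S G ((x, A) :: (x, B) :: D) ->
    G3I S G ((x, Or A B) :: D)
| G3I_Limp x y A B S G D :
    G3I ((x, y) :: S) ((x, Imp A B) :: G) ((y, A) :: D) ->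
    G3I ((x, y) :: S) ((y, B) :: (x, Imp A B) :: G) D ->
    G3I ((x, y) :: S) ((x, Imp A B) :: G) D
| G3I_Rimp x y A B S G D :
    y <> x ->
    ~ In y (rel_labels S) -> ~ In y (lf_labels G) -> ~ In y (lf_labels D) ->
    G3I ((x, y) :: S) ((y, A) :: G) ((y, B) :: D) ->
    G3I S G ((x, Imp A B) :: D)
| G3I_refl x S G D :
    G3I ((x, x) :: S) G D ->
    G3I S G D
| G3I_trans x y z S G D :
    G3I ((x, z) :: (x, y) :: (y, z) :: S) G D ->
    G3I ((x, y) :: (y, z) :: S) G D.

(* Main.v *)
Require Import Defs.
From Stdlib Require Import List Permutation.
From Stdlib Require Import Relations Lia PeanoNat.
Import ListNotations.

Definition Rs (S : list relf) : label -> label -> Prop :=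
  clos_refl_trans label (fun a b => In (a,b) S).

Inductive covL (S : list relf) (G : list lform) : label -> form -> Prop :=
| cL_base v w B : In (v,B) G -> Rs S v w -> covL S G w B
| cL_and w B C : covL S G w B -> covL S G w C -> covL S G w (And B C)
| cL_orl w B C : covL S G w B -> covL S G w (Or B C)
| cL_orr w B C : covL S G w C -> covL S G w (Or B C).

Inductive covR (S : list relf) (G D : list lform) : label -> form -> Prop :=
| cR_base v w B : In (v,B) D -> Rs S w v -> covR S G D w B
| cR_or w B C : covR S G D w B -> covR S G D w C -> covR S G D w (Or B C)
| cR_andl w B C : covR S G D w B -> covR S G D w (And B C)
| cR_andr w B C : covR S G D w C -> covR S G D w (And B C)
| cR_imp w z B C : Rs S w z -> covL S G z B -> covR S G D z C -> covR S G D w (Imp B C).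

Lemma Rs_self S x y : In (x,y) S -> Rs S x y.
Proof. intros H. apply rt_step. exact H. Qed.

Lemma Rs_tr S S' a b : (forall x y, In (x,y) S -> Rs S' x y) -> Rs S a b -> Rs S' a b.
Proof. intros H R. induction R. - apply H; auto. - apply rt_refl. - eapply rt_trans; eauto. Qed.

Lemma Rs_incl S S' a b : incl S S' -> Rs S a b -> Rs S' a b.
Proof. intros H. apply Rs_tr. intros x y Hi. apply rt_step. apply H, Hi. Qed.

Lemma covL_shift S G v w B : covL S G v B -> Rs S v w -> covL S G w B.
Proof. intros H; revert w; induction H; intros w' Hr.
 - eapply cL_base; eauto. eapply rt_trans; eauto.
 - apply cL_and; auto.
 - apply cL_orl; auto.
 - apply cL_orr; auto. Qed.

Lemma covL_tr S G S' G' w B :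
  (forall x y, In (x,y) S -> Rs S' x y) ->
  (forall v E, In (v,E) G -> covL S' G' v E) ->
  covL S G w B -> covL S' G' w B.
Proof. intros HS HG H; induction H.
 - eapply covL_shift. apply HG; eauto. eapply Rs_tr; eauto.
 - apply cL_and; auto. - apply cL_orl; auto. - apply cL_orr; auto. Qed.

Lemma covR_shift S G D w v B : covR S G D v B -> Rs S w v -> covR S G D w B.
Proof. intros H; revert w; induction H; intros w' Hr.
 - eapply cR_base; eauto. eapply rt_trans; eauto.
 - apply cR_or; auto.
 - apply cR_andl; auto. - apply cR_andr; auto.
 - eapply cR_imp; [eapply rt_trans; eauto | eauto | eauto]. Qed.

Lemma covR_tr S G D S' G' D' w B :
  (forall x y, In (x,y) S -> Rs S' x y) ->
  (forall v E, In (v,E) G -> covL S' G' v E) ->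
  (forall v E, In (v,E) D -> covR S' G' D' v E) ->
  covR S G D w B -> covR S' G' D' w B.
Proof. intros HS HG HD H; induction H.
 - eapply covR_shift. apply HD; eauto. eapply Rs_tr; eauto.
 - apply cR_or; auto. - apply cR_andl; auto. - apply cR_andr; auto.
 - eapply cR_imp; [eapply Rs_tr; eauto | eapply covL_tr; eauto | auto]. Qed.

Lemma covL_mono S G S' G' w B : incl S S' -> incl G G' -> covL S G w B -> covL S' G' w B.
Proof. intros HS HG. apply covL_tr.
 - intros x y Hi; apply rt_step; apply HS, Hi.
 - intros v E Hi; eapply cL_base; [apply HG, Hi| apply rt_refl]. Qed.

Lemma covR_mono S G D S' G' D' w B : incl S S' -> incl G G' -> incl D D' ->
  covR S G D w B -> covR S' G' D' w B.
Proof. intros HS HG HD. apply covR_tr.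
 - intros x y Hi; apply rt_step; apply HS, Hi.
 - intros v E Hi; eapply cL_base; [apply HG, Hi| apply rt_refl].
 - intros v E Hi; eapply cR_base; [apply HD, Hi| apply rt_refl]. Qed.

Lemma covL_inv S G w F : covL S G w F ->
  (exists v, In (v,F) G /\ Rs S v w) \/
  match F with And B C => covL S G w B /\ covL S G w C
  | Or B C => covL S G w B \/ covL S G w C | _ => False end.
Proof. intros H; destruct H; [left; eauto | right; auto | right; auto | right; auto]. Qed.

Lemma covR_inv S G D w F : covR S G D w F ->
  (exists v, In (v,F) D /\ Rs S w v) \/
  match F with Or B C => covR S G D w B /\ covR S G D w C
  | And B C => covR S G D w B \/ covR S G D w C
  | Imp B C => exists z, Rs S w z /\ covL S G z B /\ covR S G D z C
  | _ => False end.
Proof. intros H; destruct H; [left; eauto | right; auto | right; auto | right; auto | right; eauto]. Qed.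

Lemma perm_in {A} (a:A) l : In a l -> exists l', Permutation l (a::l').
Proof. intros H. apply in_split in H as [l1 [l2 ->]]. exists (l1++l2).
  apply Permutation_sym, Permutation_middle. Qed.

Lemma transferG S G G' v F G2 : Permutation G ((v,F)::G2) -> covL S G' v F -> incl G2 G' ->
  forall u E, In (u,E) G -> covL S G' u E.
Proof. intros P Hc Hi u E Hin. apply (Permutation_in _ P) in Hin.
  destruct Hin as [E'|Hin]; [inversion E'; subst; auto | eapply cL_base; [apply Hi, Hin| apply rt_refl]]. Qed.

Lemma transferD S G' D D' v F D2 : Permutation D ((v,F)::D2) -> covR S G' D' v F -> incl D2 D' ->
  forall u E, In (u,E) D -> covR S G' D' u E.
Proof. intros P Hc Hi u E Hin. apply (Permutation_in _ P) in Hin.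
  destruct Hin as [E'|Hin]; [inversion E'; subst; auto | eapply cR_base; [apply Hi, Hin| apply rt_refl]]. Qed.

Lemma trans2 S G D a c b : In (a,c) S -> In (c,b) S -> G3I ((a,b)::S) G D -> G3I S G D.
Proof.
  intros H1 H2 H. destruct (perm_in _ _ H1) as [S1 P1].
  assert (H2' : In (c,b) ((a,c)::S1)) by (eapply Permutation_in; eauto).
  destruct H2' as [E|H2'].
  - inversion E; subst. eapply G3I_refl. exact H.
  - destruct (perm_in _ _ H2') as [S2 P2].
    eapply G3I_mset; [| apply Permutation_sym, (Permutation_trans P1 (perm_skip _ P2)) | apply Permutation_refl | apply Permutation_refl].
    apply G3I_trans.
    eapply G3I_mset; [exact H| | apply Permutation_refl | apply Permutation_refl].
    apply perm_skip. exact (Permutation_trans P1 (perm_skip _ P2)).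
Qed.

Lemma getrel S G D a b : Rs S a b ->
  (forall S0, incl S S0 -> In (a,b) S0 -> G3I S0 G D) -> G3I S G D.
Proof.
  intros R K. apply clos_rt_rt1n in R. revert K.
  induction R as [x|x y z Hxy R IH]; intros K.
  - apply G3I_refl with (x:=x). apply K. intros p Hp; right; exact Hp. left; reflexivity.
  - apply IH. intros S0 Hinc Hyz. apply (trans2 S0 G D x y z); [apply Hinc, Hxy| exact Hyz|].
    apply K. intros p Hp; right; apply Hinc, Hp. left; reflexivity.
Qed.

Lemma fresh_ex (l : list nat) : exists n, ~ In n l.
Proof. exists (S (fold_right Nat.max 0 l)).
  assert (H : forall n, In n l -> n <= fold_right Nat.max 0 l).
  { induction l as [|a l IH]; simpl; intros n Hn; [destruct Hn|].
    destruct Hn as [->|Hn]; [lia| specialize (IH n Hn); lia]. }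
  intro H'; apply H in H'; lia. Qed.

Lemma rel_labels_in S a b : In (a,b) S -> In a (rel_labels S) /\ In b (rel_labels S).
Proof. intros H; unfold rel_labels; split; apply in_flat_map; exists (a,b); simpl; auto. Qed.

Lemma lf_labels_in G u B : In (u,B) G -> In u (lf_labels G).
Proof. intros H; unfold lf_labels; apply in_map_iff; exists (u,B); auto. Qed.

Definition upd (h : label -> label) (z z' : label) : label -> label :=
  fun l => if Nat.eq_dec l z then z' else h l.

Lemma upd_eq h z z' : upd h z z' z = z'.
Proof. unfold upd; destruct (Nat.eq_dec z z); congruence. Qed.
Lemma upd_neq h z z' l : l <> z -> upd h z z' l = h l.
Proof. unfold upd; destruct (Nat.eq_dec l z); congruence. Qed.

Lemma main S G D : G3I S G D -> forall h S' G' D',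
  (forall a b, In (a,b) S -> Rs S' (h a) (h b)) ->
  (forall u B, In (u,B) G -> covL S' G' (h u) B) ->
  (forall u B, In (u,B) D -> covR S' G' D' (h u) B) ->
  G3I S' G' D'.
Proof.
  intros Hd. induction Hd as
    [S G D S1 G1 D1 H IH P1 P2 P3
    | x y P S G D
    | x S G D
    | x A B S G D H IH
    | x A B S G D H1 IH1 H2 IH2
    | x A B S G D H1 IH1 H2 IH2
    | x A B S G D H IH
    | x y A B S G D H1 IH1 H2 IH2
    | x y A B S G D Hne HnS HnG HnD H IH
    | x S G D H IH
    | x y z S G D H IH];
    intros h S0 G0 D0 HS HG HD.
  -
    apply (IH h); intros; [apply HS|apply HG|apply HD]; eapply Permutation_in; eauto.
  -
    assert (Hl := HG x (Atom P) (or_introl eq_refl)).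
    assert (Hr := HD y (Atom P) (or_introl eq_refl)).
    assert (Hxy := HS x y (or_introl eq_refl)).
    destruct (covL_inv _ _ _ _ Hl) as [[v [Hv Rv]]|[]].
    destruct (covR_inv _ _ _ _ _ Hr) as [[v' [Hv' Rv']]|[]].
    apply (getrel S0 G0 D0 v v').
    { eapply rt_trans; [exact Rv| eapply rt_trans; [exact Hxy|exact Rv']]. }
    intros S1 Hinc Hin.
    destruct (perm_in _ _ Hin) as [S2 PS]. destruct (perm_in _ _ Hv) as [G2 PG].
    destruct (perm_in _ _ Hv') as [D2 PD].
    eapply G3I_mset; [apply G3I_Ax| apply Permutation_sym, PS| apply Permutation_sym, PG| apply Permutation_sym, PD].
  -
    assert (Hl := HG x Bot (or_introl eq_refl)).
    destruct (covL_inv _ _ _ _ Hl) as [[v [Hv Rv]]|[]].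
    destruct (perm_in _ _ Hv) as [G2 PG].
    eapply G3I_mset; [apply G3I_Lbot| apply Permutation_refl| apply Permutation_sym, PG| apply Permutation_refl].
  -
    assert (Hl := HG x (And A B) (or_introl eq_refl)).
    destruct (covL_inv _ _ _ _ Hl) as [[v [Hv Rv]]|[HA HB]].
    + destruct (perm_in _ _ Hv) as [G2 PG].
      eapply G3I_mset; [apply G3I_Land| apply Permutation_refl| apply Permutation_sym, PG| apply Permutation_refl].
      assert (TG : forall u E, In (u,E) G0 -> covL S0 ((v,A)::(v,B)::G2) u E).
      { eapply transferG; [exact PG| |].
        - apply cL_and; eapply cL_base; [left; reflexivity| apply rt_refl| right; left; reflexivity| apply rt_refl].
        - intros p Hp; right; right; exact Hp. }
      apply (IH h); [exact HS| |].
      * intros u C [E|[E|Hin]].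
        -- inversion E; subst. eapply cL_base; [left; reflexivity| exact Rv].
        -- inversion E; subst. eapply cL_base; [right; left; reflexivity| exact Rv].
        -- eapply covL_tr; [apply Rs_self| exact TG| apply HG; right; exact Hin].
      * intros u C Hin. eapply covR_tr; [apply Rs_self| exact TG| | apply HD; exact Hin].
        intros p E Hp; eapply cR_base; [exact Hp| apply rt_refl].
    + apply (IH h); [exact HS| |exact HD].
      intros u C [E|[E|Hin]]; [inversion E; subst; exact HA|inversion E; subst; exact HB|apply HG; right; exact Hin].
  -
    assert (Hr := HD x (And A B) (or_introl eq_refl)).
    destruct (covR_inv _ _ _ _ _ Hr) as [[v [Hv Rv]]|[HA|HB]].
    + destruct (perm_in _ _ Hv) as [D2 PD].
      eapply G3I_mset; [apply G3I_Rand| apply Permutation_refl| apply Permutation_refl| apply Permutation_sym, PD].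
      * apply (IH1 h); [exact HS|exact HG|].
        intros u C [E|Hin].
        -- inversion E; subst. eapply cR_base; [left; reflexivity| exact Rv].
        -- eapply covR_tr; [apply Rs_self| | | apply HD; right; exact Hin].
           ++ intros p E Hp; eapply cL_base; [exact Hp| apply rt_refl].
           ++ eapply transferD; [exact PD| |].
              ** apply cR_andl; eapply cR_base; [left; reflexivity| apply rt_refl].
              ** intros p Hp; right; exact Hp.
      * apply (IH2 h); [exact HS|exact HG|].
        intros u C [E|Hin].
        -- inversion E; subst. eapply cR_base; [left; reflexivity| exact Rv].
        -- eapply covR_tr; [apply Rs_self| | | apply HD; right; exact Hin].
           ++ intros p E Hp; eapply cL_base; [exact Hp| apply rt_refl].
           ++ eapply transferD; [exact PD| |].
              ** apply cR_andr; eapply cR_base; [left; reflexivity| apply rt_refl].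
              ** intros p Hp; right; exact Hp.
    + apply (IH1 h); [exact HS|exact HG|].
      intros u C [E|Hin]; [inversion E; subst; exact HA| apply HD; right; exact Hin].
    + apply (IH2 h); [exact HS|exact HG|].
      intros u C [E|Hin]; [inversion E; subst; exact HB| apply HD; right; exact Hin].
  -
    assert (Hl := HG x (Or A B) (or_introl eq_refl)).
    destruct (covL_inv _ _ _ _ Hl) as [[v [Hv Rv]]|[HA|HB]].
    + destruct (perm_in _ _ Hv) as [G2 PG].
      eapply G3I_mset; [apply G3I_Lor| apply Permutation_refl| apply Permutation_sym, PG| apply Permutation_refl].
      * assert (TG : forall u E, In (u,E) G0 -> covL S0 ((v,A)::G2) u E).
        { eapply transferG; [exact PG| |].
          - apply cL_orl; eapply cL_base; [left; reflexivity| apply rt_refl].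
          - intros p Hp; right; exact Hp. }
        apply (IH1 h); [exact HS| |].
        -- intros u C [E|Hin].
           ++ inversion E; subst. eapply cL_base; [left; reflexivity| exact Rv].
           ++ eapply covL_tr; [apply Rs_self| exact TG| apply HG; right; exact Hin].
        -- intros u C Hin. eapply covR_tr; [apply Rs_self| exact TG| | apply HD; exact Hin].
           intros p E Hp; eapply cR_base; [exact Hp| apply rt_refl].
      * assert (TG : forall u E, In (u,E) G0 -> covL S0 ((v,B)::G2) u E).
        { eapply transferG; [exact PG| |].
          - apply cL_orr; eapply cL_base; [left; reflexivity| apply rt_refl].
          - intros p Hp; right; exact Hp. }
        apply (IH2 h); [exact HS| |].
        -- intros u C [E|Hin].
           ++ inversion E; subst. eapply cL_base; [left; reflexivity| exact Rv].
           ++ eapply covL_tr; [apply Rs_self| exact TG| apply HG; right; exact Hin].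
        -- intros u C Hin. eapply covR_tr; [apply Rs_self| exact TG| | apply HD; exact Hin].
           intros p E Hp; eapply cR_base; [exact Hp| apply rt_refl].
    + apply (IH1 h); [exact HS| |exact HD].
      intros u C [E|Hin]; [inversion E; subst; exact HA| apply HG; right; exact Hin].
    + apply (IH2 h); [exact HS| |exact HD].
      intros u C [E|Hin]; [inversion E; subst; exact HB| apply HG; right; exact Hin].
  -
    assert (Hr := HD x (Or A B) (or_introl eq_refl)).
    destruct (covR_inv _ _ _ _ _ Hr) as [[v [Hv Rv]]|[HA HB]].
    + destruct (perm_in _ _ Hv) as [D2 PD].
      eapply G3I_mset; [apply G3I_Ror| apply Permutation_refl| apply Permutation_refl| apply Permutation_sym, PD].
      apply (IH h); [exact HS|exact HG|].
      intros u C [E|[E|Hin]].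
      * inversion E; subst. eapply cR_base; [left; reflexivity| exact Rv].
      * inversion E; subst. eapply cR_base; [right; left; reflexivity| exact Rv].
      * eapply covR_tr; [apply Rs_self| | | apply HD; right; exact Hin].
        -- intros p E Hp; eapply cL_base; [exact Hp| apply rt_refl].
        -- eapply transferD; [exact PD| |].
           ++ apply cR_or; eapply cR_base; [left; reflexivity| apply rt_refl| right; left; reflexivity| apply rt_refl].
           ++ intros p Hp; right; right; exact Hp.
    + apply (IH h); [exact HS|exact HG|].
      intros u C [E|[E|Hin]]; [inversion E; subst; exact HA|inversion E; subst; exact HB|apply HD; right; exact Hin].
  -
    assert (Hl := HG x (Imp A B) (or_introl eq_refl)).
    assert (Hxy := HS x y (or_introl eq_refl)).
    destruct (covL_inv _ _ _ _ Hl) as [[v [Hv Rv]]|[]].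
    apply (getrel S0 G0 D0 v (h y)); [eapply rt_trans; eauto|].
    intros S1 Hinc Hin.
    destruct (perm_in _ _ Hin) as [S2 PS]. destruct (perm_in _ _ Hv) as [G2 PG].
    eapply G3I_mset; [apply G3I_Limp| apply Permutation_sym, PS| apply Permutation_sym, PG| apply Permutation_refl].
    + eapply G3I_mset; [| exact PS| exact PG| apply Permutation_refl].
      apply (IH1 h).
      * intros a b Hab; eapply Rs_incl; [exact Hinc| apply HS, Hab].
      * intros u C Hu; eapply covL_mono; [exact Hinc| apply incl_refl| apply HG, Hu].
      * intros u C [E|Hu].
        -- inversion E; subst. eapply cR_base; [left; reflexivity| apply rt_refl].
        -- eapply covR_mono; [exact Hinc| apply incl_refl| apply incl_tl, incl_refl| apply HD, Hu].
    + eapply G3I_mset; [| exact PS| apply perm_skip, PG| apply Permutation_refl].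
      apply (IH2 h).
      * intros a b Hab; eapply Rs_incl; [exact Hinc| apply HS, Hab].
      * intros u C [E|Hu].
        -- inversion E; subst. eapply cL_base; [left; reflexivity| apply rt_refl].
        -- eapply covL_mono; [exact Hinc| apply incl_tl, incl_refl| apply HG, Hu].
      * intros u C Hu.
        eapply covR_mono; [exact Hinc| apply incl_tl, incl_refl| apply incl_refl| apply HD, Hu].
  -
    assert (Hr := HD x (Imp A B) (or_introl eq_refl)).
    destruct (covR_inv _ _ _ _ _ Hr) as [[v [Hv Rv]]|[z [Rz [HzA HzB]]]].
    + destruct (perm_in _ _ Hv) as [D2 PD].
      destruct (fresh_ex (v :: rel_labels S0 ++ lf_labels G0 ++ lf_labels D0)) as [zs Hf].
      assert (Hf1 : zs <> v) by (intro E; apply Hf; left; auto).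
      assert (Hf2 : ~ In zs (rel_labels S0)) by (intro E; apply Hf; right; apply in_or_app; left; auto).
      assert (Hf3 : ~ In zs (lf_labels G0)) by (intro E; apply Hf; right; apply in_or_app; right; apply in_or_app; left; auto).
      assert (Hf4 : ~ In zs (lf_labels D2)).
      { intro E; apply Hf; right; apply in_or_app; right; apply in_or_app; right.
        unfold lf_labels in *. apply in_map_iff in E as [p [Ep Hp]].
        apply in_map_iff. exists p; split; [exact Ep|].
        eapply Permutation_in; [apply Permutation_sym, PD| right; exact Hp]. }
      eapply G3I_mset; [eapply (G3I_Rimp v zs A B S0 G0 D2); auto | apply Permutation_refl| apply Permutation_refl| apply Permutation_sym, PD].
      apply (IH (upd h y zs)).
      * intros a b [E|Hin].
        -- inversion E; subst. rewrite upd_eq, upd_neq by (intro; apply Hne; auto).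
           eapply rt_trans; [eapply Rs_incl; [apply incl_tl, incl_refl| exact Rv]| apply rt_step; left; reflexivity].
        -- destruct (rel_labels_in _ _ _ Hin) as [Ha Hb].
           rewrite !upd_neq by (intro; subst; auto).
           eapply Rs_incl; [apply incl_tl, incl_refl| apply HS, Hin].
      * intros u C [E|Hin].
        -- inversion E; subst. rewrite upd_eq. eapply cL_base; [left; reflexivity| apply rt_refl].
        -- assert (Hu := lf_labels_in _ _ _ Hin). rewrite upd_neq by (intro; subst; auto).
           eapply covL_mono; [apply incl_tl, incl_refl| apply incl_tl, incl_refl| apply HG, Hin].
      * intros u C [E|Hin].
        -- inversion E; subst. rewrite upd_eq. eapply cR_base; [left; reflexivity| apply rt_refl].
        -- assert (Hu := lf_labels_in _ _ _ Hin). rewrite upd_neq by (intro; subst; auto).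
           eapply covR_tr; [| | | apply HD; right; exact Hin].
           ++ intros a b Hab; apply rt_step; right; exact Hab.
           ++ intros p E Hp; eapply cL_base; [right; exact Hp| apply rt_refl].
           ++ eapply transferD; [exact PD| |].
              ** eapply cR_imp; [apply rt_step; left; reflexivity
                                | eapply cL_base; [left; reflexivity| apply rt_refl]
                                | eapply cR_base; [left; reflexivity| apply rt_refl]].
              ** intros p Hp; right; exact Hp.
    + apply (IH (upd h y z)).
      * intros a b [E|Hin].
        -- inversion E; subst. rewrite upd_eq, upd_neq by (intro; apply Hne; auto). exact Rz.
        -- destruct (rel_labels_in _ _ _ Hin) as [Ha Hb].
           rewrite !upd_neq by (intro; subst; auto). apply HS, Hin.
      * intros u C [E|Hin].
        -- inversion E; subst. rewrite upd_eq. exact HzA.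
        -- assert (Hu := lf_labels_in _ _ _ Hin). rewrite upd_neq by (intro; subst; auto).
           apply HG, Hin.
      * intros u C [E|Hin].
        -- inversion E; subst. rewrite upd_eq. exact HzB.
        -- assert (Hu := lf_labels_in _ _ _ Hin). rewrite upd_neq by (intro; subst; auto).
           apply HD; right; exact Hin.
  -
    apply (IH h); [|exact HG|exact HD].
    intros a b [E|Hin]; [inversion E; subst; apply rt_refl| apply HS, Hin].
  -
    apply (IH h); [|exact HG|exact HD].
    intros a b [E|Hin].
    + inversion E; subst. eapply rt_trans; [apply HS; left; reflexivity| apply HS; right; left; reflexivity].
    + apply HS, Hin.
Qed.

Theorem mainTheorem2 :
  forall (x y : label) (A : form) (S : list relf) (G D : list lform),
    (G3I ((x, y) :: S) ((x, A) :: (y, A) :: G) D ->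
     G3I ((x, y) :: S) ((x, A) :: G) D)
    /\
    (G3I ((x, y) :: S) G ((x, A) :: (y, A) :: D) ->
     G3I ((x, y) :: S) G ((y, A) :: D)).
Proof.
  intros x y A S G D. split; intros H; apply (main _ _ _ H (fun l => l)).
  - intros a b Hab; apply Rs_self, Hab.
  - intros u C [E|[E|Hin]].
    + inversion E; subst. eapply cL_base; [left; reflexivity| apply rt_refl].
    + inversion E; subst. eapply cL_base; [left; reflexivity| apply rt_step; left; reflexivity].
    + eapply cL_base; [right; exact Hin| apply rt_refl].
  - intros u C Hin; eapply cR_base; [exact Hin| apply rt_refl].
  - intros a b Hab; apply Rs_self, Hab.
  - intros u C Hin; eapply cL_base; [exact Hin| apply rt_refl].
  - intros u C [E|[E|Hin]].
    + inversion E; subst. eapply cR_base; [left; reflexivity| apply rt_step; left; reflexivity].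
    + inversion E; subst. eapply cR_base; [left; reflexivity| apply rt_refl].
    + eapply cR_base; [right; exact Hin| apply rt_refl].
Qed.
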